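(* Let $S$ be a MANS-semigroup with $\mathrm{msg}(S)=\{n_1<n_2<\cdots<n_e<n_{e+1}\}$, where $e\geq 2$. Then for every $i\in\{2,\ldots,e\}$, $S'=\langle n_1,n_2,\ldots,n_i\rangle$ is a MANS-semigroup with $\mathrm{e}(S')=i$.
   Context: $\mathbb{N}=\{0,1,2,\ldots\}$. A numerical semigroup is a subset $S\subseteq\mathbb{N}$ closed under addition, containing $0$, with $\mathbb{N}\setminus S$ finite; $\langle A\rangle$ is the submonoid generated by $A$; $\mathrm{msg}(S)$ is the unique finite minimal system of generators and $\mathrm{e}(S)=|\mathrm{msg}(S)|$. $S$ is a MANS-semigroup if $w(1)<\cdots<w(\mathrm{m}(S)-1)$, where $\mathrm{m}(S)$ is the least element of $S\setminus\{0\}$ and $w(i)$ the least element of $S$ congruent to $i$ modulo $\mathrm{m}(S)$. *)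

(* Defs.v *)
From mathcomp Require Import all_boot.
Set Implicit Arguments. Unset Strict Implicit. Unset Printing Implicit Defensive.

Inductive gen (A : seq nat) : nat -> Prop :=
| gen0 : gen A 0
| genS : forall a x, a \in A -> gen A x -> gen A (a + x).

Definition numerical_semigroup (S : nat -> Prop) : Prop :=
  [/\ S 0, (forall x y, S x -> S y -> S (x + y))
    & exists N, forall n, N <= n -> S n].

Definition is_msg (S : nat -> Prop) (A : seq nat) : Prop :=
  [/\ uniq A, (forall x, S x <-> gen A x)
    & forall B : seq nat, {subset B <= A} -> (forall x, S x <-> gen B x) ->
        {subset A <= B}].

Definition embedding_dimension (S : nat -> Prop) (k : nat) : Prop :=
  exists A, is_msg S A /\ size A = k.

Definition is_multiplicity (S : nat -> Prop) (m : nat) : Prop :=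
  [/\ 0 < m, S m & forall x, 0 < x -> S x -> m <= x].

Definition is_apery_elt (S : nat -> Prop) (m i w : nat) : Prop :=
  [/\ S w, w = i %[mod m] & forall x, S x -> x = i %[mod m] -> w <= x].

Definition MANS (S : nat -> Prop) : Prop :=
  numerical_semigroup S /\
  exists m, is_multiplicity S m /\
    forall i j wi wj, 1 <= i -> i < j -> j <= m - 1 ->
      is_apery_elt S m i wi -> is_apery_elt S m j wj -> wi < wj.

(* Main.v *)
Require Import Defs.
From mathcomp Require Import all_boot zify.
From Stdlib Require Import Classical.

Lemma gen_add A x y : gen A x -> gen A y -> gen A (x + y).
Proof. elim=> [|a x' Ha _ IH] Hy //. rewrite -addnA; exact: genS Ha (IH Hy). Qed.

Lemma gen_mem A a : a \in A -> gen A a.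
Proof. move=> Ha; rewrite -[a]addn0; apply: genS => //; exact: gen0. Qed.

Lemma gen_sub A B x : (forall a, a \in A -> gen B a) -> gen A x -> gen B x.
Proof. move=> H; elim=> [|a x' Ha _ IH]; first exact: gen0. exact: gen_add (H _ Ha) IH. Qed.

Lemma gen_mul A k x : gen A x -> gen A (k * x).
Proof. move=> Hx; elim: k => [|k IH]; first exact: gen0. rewrite mulSn; exact: gen_add. Qed.

Lemma gen_dec (p : pred nat) A x : p 0 -> (forall u v, p u -> p v -> p (u + v)) ->
  gen A x -> ~~ p x -> exists a y, [/\ a \in A, ~~ p a, gen A y & x = a + y].
Proof.
move=> p0 pD; elim=> [|a x' Ha Hx' IH]; first by rewrite p0.
case Hpa: (p a).
  move=> Hn. have Hx'n : ~~ p x'.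
    by apply/negP=> Hp; move/negP: Hn; apply; exact: pD.
  have [b [y [Hb Hpb Hy ->]]] := IH Hx'n.
  exists b, (a + y); split=> //; first exact: genS. by rewrite addnCA.
move=> _; exists a, x'; split=> //. by rewrite Hpa.
Qed.

Lemma msg_redundant S s b : is_msg S s -> b \in s -> gen (filter (predC1 b) s) b -> False.
Proof.
move=> [Hu Hgen Hmin] Hb HB.
have Hsub : {subset filter (predC1 b) s <= s} by move=> x; rewrite mem_filter => /andP[].
have Heq : forall x, S x <-> gen (filter (predC1 b) s) x.
  move=> x; split.
    move/Hgen; apply: gen_sub => a Ha. case: (eqVneq a b) => [->//|Hab].
    by apply: gen_mem; rewrite mem_filter /= Hab.
  move=> H; apply/Hgen; move: H; apply: gen_sub => a Ha; apply: gen_mem; exact: Hsub.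
have := Hmin _ Hsub Heq b Hb. by rewrite mem_filter /= eqxx.
Qed.

Lemma sorted_take_drop s i a b : sorted ltn s -> a \in take i s -> b \in drop i s -> a < b.
Proof.
move=> Hs Ha Hb. move: Hs; rewrite (sorted_pairwise ltn_trans) -{1}(cat_take_drop i s).
rewrite pairwise_cat => /and3P[/allrelP H _ _]. exact: H.
Qed.

Lemma gen_restrict s i a y : sorted ltn s -> a \in take i s -> gen s y -> y < a -> gen (take i s) y.
Proof.
move=> Hs Ha; elim=> [|b x Hb Hx IH] Hlt; first exact: gen0.
apply: genS; last by apply: IH; lia.
move: Hb; rewrite -{1}(cat_take_drop i s) mem_cat => /orP[//|Hb].
have := @sorted_take_drop s i a b Hs Ha Hb; lia.
Qed.

Lemma apery_exists S m t : numerical_semigroup S -> 0 < m -> exists w, is_apery_elt S m t w.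
Proof.
move=> [_ _ [N HN]] Hm.
have H0 : S (N * m + t) /\ N * m + t = t %[mod m].
  split; last by rewrite modnMDl. apply: HN; nia.
move: H0; move: (N * m + t) => n.
elim: n {-2}n (leqnn n) => [|n IH] k Hk [Sk Hkm].
  exists k; split=> // x _ _; lia.
case: (classic (exists x, x < k /\ S x /\ x = t %[mod m])) => [[x [Hx [Sx Hxm]]]|Hno].
  apply: (IH x) => //; lia.
exists k; split=> // x Sx Hxm. case: (leqP k x) => // Hlt.
exfalso; apply: Hno; exists x; split=> //.
Qed.

Lemma modsum m u v : 0 < m -> u < m -> v < m ->
  ((u + v) %% m = u + v /\ u + v < m) \/ ((u + v) %% m = u + v - m /\ m <= u + v).
Proof.
move=> Hm Hu Hv. case: (ltnP (u + v) m) => H.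
  by left; rewrite modn_small.
right; split=> //. have -> : u + v = (u + v - m) + m by lia.
rewrite modnDr modn_small; lia.
Qed.

Ltac clear_mod := repeat match goal with H : context [_ %% _] |- _ => clear H end.
Ltac mlia := clear_mod; lia.
Ltac mnia := clear_mod; nia.

Theorem corollary4p3 (S : nat -> Prop) (e : nat) (s : seq nat) :
  MANS S -> 2 <= e ->
  is_msg S s -> sorted ltn s -> size s = e.+1 ->
  forall i, 2 <= i <= e ->
    MANS (gen (take i s)) /\ embedding_dimension (gen (take i s)) i.
Proof.
move=> [HnS [m [[Hm0 Sm Hmmin] Hmono]]] He Hmsg Hs Hsz i /andP[Hi2 Hie].
have [Hu Hgen Hmin] := Hmsg.
set A := take i s.
have HAs : {subset A <= s} by move=> x; exact: mem_take.
have HSA : forall x, gen A x -> S x.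
  move=> x Hx; apply/Hgen; move: Hx; apply: gen_sub => b Hb; apply: gen_mem; exact: HAs.
have HAS : forall a, a \in A -> S a by move=> a Ha; apply: HSA; exact: gen_mem.
have HsizeA : size A = i by rewrite /A size_take Hsz; case: ifP => //; lia.
have HuA : uniq A by exact: take_uniq.
have Hms : m \in s.
  have Hpd : forall u v, u == 0 -> v == 0 -> u + v == 0 by move=> u v /eqP-> /eqP->.
  have [b [y [Hb Hb0 Hy Hmby]]] := @gen_dec (fun x => x == 0) s m (eqxx 0) Hpd (proj1 (Hgen m) Sm) (ltac:(rewrite -lt0n; exact: Hm0)).
  have Sb : S b by apply/Hgen; exact: gen_mem.
  have := Hmmin b (ltac:(rewrite lt0n; exact: Hb0)) Sb.
  move=> Hmb; have -> : m = b by lia. done.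
have Hnz : forall b, b \in s -> b != m -> b %% m != 0.
  move=> b Hb Hbm; apply/negP => /eqP Hbm0.
  apply: (@msg_redundant S s b Hmsg Hb).
  rewrite {2}(divn_eq b m) Hbm0 addn0. apply: gen_mul; apply: gen_mem.
  by rewrite mem_filter /= Hms andbT eq_sym.
have [a0 Ha0 Ha0m] : exists2 a, a \in A & a != m.
  case: (boolP (all (pred1 m) A)) => [Hall|].
    exfalso. have Hsub : {subset A <= [:: m]}.
      by move=> x Hx; move/allP: Hall => /(_ x Hx) /= /eqP ->; rewrite inE.
    have := uniq_leq_size HuA Hsub. rewrite HsizeA /=. lia.
  by case/allPn => x Hx /= Hxm; exists x.
have Ha0nz := Hnz a0 (HAs _ Ha0) Ha0m.
have Hm2 : 2 <= m.
  case: m Hm0 Hmmin Hmono Sm Hms Hnz Ha0m Ha0nz => [|[|m]] //. by rewrite modn1.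
have Ha0pos : 0 < a0 by case: a0 Ha0 Ha0m Ha0nz => [|a0] //; rewrite mod0n.
have Hma0 : m < a0.
  have := Hmmin a0 Ha0pos (HAS _ Ha0). rewrite leq_eqVlt eq_sym (negbTE Ha0m). done.
have HmA : gen A m by apply: (@gen_restrict s i a0 m Hs Ha0); [apply/Hgen; exact: Sm | exact: Hma0].
have Hap : forall t, exists w, is_apery_elt S m t w by move=> t; exact: apery_exists.
have Hstep : forall x j, gen A x -> x %% m = j -> 2 <= j -> j < m ->
    exists z, [/\ gen A z, z %% m = j.-1 & z < x].
  move=> x j Hx Hxj Hj2 Hjm.
  have Hpd : forall u v, u %% m == 0 -> v %% m == 0 -> (u + v) %% m == 0.
    by move=> u v /eqP Hu' /eqP Hv'; rewrite -modnDm Hu' Hv' add0n mod0n.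
  have Hnx : ~~ (x %% m == 0) by rewrite Hxj -lt0n; mlia.
  have [a [y [Ha Hpa Hy Hxay]]] := @gen_dec (fun x => x %% m == 0) A x (ltac:(by rewrite /= mod0n)) Hpd Hx Hnx.
  have Hapos : 0 < a by case: a Ha Hpa Hxay => [|a] //; rewrite mod0n.
  have Hj' : j = (a %% m + y %% m) %% m by rewrite modnDm -Hxay.
  have Hra := ltn_pmod a Hm0. have Hry := ltn_pmod y Hm0.
  have Hms' := modsum _ _ _ Hm0 Hra Hry.
  rewrite -Hj' in Hms'.
  move: Hpa Hra Hms'; move Era: (a %% m) => ra Hpa Hra Hms'.
  move: Hry Hms'; move Ery: (y %% m) => ry Hry Hms'.
  have Hra0 : 0 < ra by rewrite lt0n.
  case: (eqVneq ra 1) => Hr1.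
    exists y; split=> //; last by mlia.
    rewrite Ery. move: Hms'; rewrite Hr1; mlia.
  have Hr2 : 2 <= ra by mlia.
  have [wr [Swr Hwrm Hwrmin]] := Hap ra.
  have [wr1 [Swr1 Hwr1m Hwr1min]] := Hap ra.-1.
  have Hlt : wr1 < wr.
    have h1 : 0 < ra.-1 by mlia.
    have h2 : ra.-1 < ra by mlia.
    have h3 : ra <= m - 1 by mlia.
    exact: (Hmono ra.-1 ra wr1 wr h1 h2 h3 (And3 Swr1 Hwr1m Hwr1min) (And3 Swr Hwrm Hwrmin)).
  have Hle : wr <= a by apply: Hwrmin; [exact: HAS | by rewrite Era modn_small].
  have Hwr1A : gen A wr1 by apply: (@gen_restrict s i a wr1 Hs Ha); [apply/Hgen; exact: Swr1 | mlia].
  exists (y + wr1); split; first exact: gen_add; last by mlia.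
  have Hw1 : wr1 %% m = ra.-1 by rewrite Hwr1m modn_small //; mlia.
  rewrite -modnDm Hw1 Ery.
  have Hr1' : ra.-1 < m by mlia.
  case: (modsum _ _ _ Hm0 Hry Hr1') => [[-> ?]|[-> ?]]; mlia.
have Hiter : forall d x j, gen A x -> x %% m = j -> j < m -> d.+1 < j ->
    exists z, [/\ gen A z, z %% m = j - d.+1 & z < x].
  elim=> [|d IH] x j Hx Hxj Hjm Hdj.
    have [z [Hz Hzm Hzx]] := Hstep x j Hx Hxj Hdj Hjm.
    by exists z; split=> //; rewrite Hzm; mlia.
  have [z [Hz Hzm Hzx]] := IH x j Hx Hxj Hjm (ltac:(mlia)).
  have [z' [Hz' Hz'm Hz'x]] := Hstep z (j - d.+1) Hz Hzm (ltac:(mlia)) (ltac:(mlia)).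
  by exists z'; split=> //; [rewrite Hz'm; mlia | mlia].
have [x1 Hx1 Hx1m] : exists2 x1, gen A x1 & x1 %% m = 1.
  have Hra := ltn_pmod a0 Hm0.
  move: Ha0nz Hra; move Er: (a0 %% m) => r Hrnz Hra.
  case: (eqVneq r 1) => Hr1; first by exists a0; [exact: gen_mem | rewrite Er Hr1].
  have Hr0 : 0 < r by rewrite lt0n.
  have [z [Hz Hzm _]] := Hiter (r - 2) a0 r (gen_mem _ _ Ha0) Er Hra (ltac:(mlia)).
  by exists z => //; rewrite Hzm; mlia.
have Hx1pos : 0 < x1 by case: x1 Hx1 Hx1m => [|x1] //; rewrite mod0n.
split.
  split.
    split; [exact: gen0 | exact: gen_add |].
    exists (m * x1) => n Hn.
    have Hx1e : x1 = x1 %/ m * m + 1 by rewrite {1}(divn_eq x1 m) Hx1m.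
    move: (divn_eq n m) (ltn_pmod n Hm0) => Hnm Hr.
    move: (n %/ m) (n %% m) Hnm Hr => q r Hnm Hr.
    move: (x1 %/ m) Hx1e => q1 Hx1e.
    have H1 : r * q1 * m <= q * m.
      have : m * (q1 * m) + m <= q * m + r by mnia.
      mnia.
    have Hq : r * q1 <= q by rewrite leq_pmul2r in H1.
    have -> : n = (q - r * q1) * m + r * x1.
      rewrite mulnBl Hx1e mulnDr muln1 !mulnA. mlia.
    apply: gen_add; apply: gen_mul; [exact: HmA | exact: Hx1].
  exists m; split; first split=> //.
    by move=> x Hx HxA; apply: Hmmin => //; exact: HSA.
  move=> i' j' wi wj Hi1 Hij Hjm [Gwi Hwim Hwimin] [Gwj Hwjm Hwjmin].
  have Hwj : wj %% m = j' by rewrite Hwjm modn_small //; mlia.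
  have [z [Hz Hzm Hzx]] := Hiter (j' - i').-1 wj j' Gwj Hwj (ltac:(mlia)) (ltac:(mlia)).
  have : wi <= z.
    apply: Hwimin => //. rewrite Hzm (@modn_small i' m); mlia.
  mlia.
exists A; split=> //; split=> // B HBA HBeq.
set C := B ++ drop i s.
have HCs : forall x, S x <-> gen C x.
  move=> x; split.
    move/Hgen; apply: gen_sub => b Hb.
    move: Hb; rewrite -(cat_take_drop i s) mem_cat => /orP[Hb|Hb].
      have : gen B b by apply/HBeq; exact: gen_mem.
      apply: gen_sub => c Hc; apply: gen_mem; by rewrite mem_cat Hc.
    by apply: gen_mem; rewrite mem_cat Hb orbT.
  move=> Hx; apply/Hgen; move: Hx; apply: gen_sub => c.
  rewrite mem_cat => /orP[Hc|Hc]; apply: gen_mem; [exact: HAs (HBA _ Hc) | exact: mem_drop Hc].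
have HCsub : {subset C <= s}.
  move=> c; rewrite mem_cat => /orP[Hc|Hc]; [exact: HAs (HBA _ Hc) | exact: mem_drop Hc].
move=> a Ha. have := Hmin C HCsub HCs a (HAs _ Ha).
rewrite mem_cat => /orP[//|Hd].
exfalso. move: Hu; rewrite -(cat_take_drop i s) cat_uniq => /and3P[_ /hasPn H _].
by move: (H a Hd); rewrite /= Ha.
Qed.
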